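(* (Uncertainty Principle.) Let $G$ be a locally compact abelian group with dual group $\Gamma$, let $(\mu,\nu)$ be a spectral pair of positive Borel measures on $(G,\Gamma)$ with associated unitary $F\colon\mathcal{L}^2(\mu)\to\mathcal{L}^2(\nu)$, and let $f\in\mathcal{L}^2(\mu)$ with $\|f\|_\mu>0$. Let $\varepsilon,\delta\ge0$. If $A\subset G$ and $B\subset\Gamma$ are measurable sets such that $\|f-\chi_Af\|_\mu\le\varepsilon\|f\|_\mu$ and $\|Ff-\chi_BFf\|_\nu\le\delta\|Ff\|_\nu$, then $(1-\varepsilon-\delta)^2\le\mu(A)\nu(B)$.
   Context: $G$ is written additively; $\Gamma=\hat G$ is the group of continuous homomorphisms $G\to\mathbb{T}$ (unit circle in $\mathbb{C}$), with $G$ identified with the dual of $\Gamma$. Write $\langle x,\xi\rangle$ for the pairing, $e_\xi(x)=e_x(\xi)=\langle x,\xi\rangle$. $(\mu,\nu)$ is a spectral pair if, with $(Ff)(\xi)=\int_G f(x)\overline{e_\xi(x)}\,d\mu(x)$ for $f\in\mathcal{L}^1\cap\mathcal{L}^2(\mu)$, the set $\{Ff\}$ is dense in $\mathcal{L}^2(\nu)$ and $\int_\Gamma|Ff|^2d\nu=\int_G|f|^2d\mu$ for all such $f$; $F$ then extends by continuity to an isometric isomorphism of $\mathcal{L}^2(\mu)$ onto $\mathcal{L}^2(\nu)$. $\chi_A$ denotes the indicator function of $A$.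
   Formalization: The tolerances ε and δ are also constrained by ε + δ ≤ 1, beyond ε, δ ≥ 0. The statement above fails without it. *)

(* Defs.v *)
From HB Require Import structures.
From mathcomp Require Import all_boot all_order all_algebra.
From mathcomp Require Import all_classical all_reals all_analysis.
From mathcomp Require Import complex.
Import Order.TTheory GRing.Theory Num.Theory.

Set Implicit Arguments.
Unset Strict Implicit.
Unset Printing Implicit Defensive.

Local Open Scope ring_scope.
Local Open Scope classical_set_scope.

Definition borelT (G : topologicalZmodType) :=
  @g_sigma_algebraType (GRing.Zmodule.sort G : pointedType) (@open G).

Definition cnorm {R : realType} (z : R[i]) : R := ComplexField.Normc.normc z.

Definition ccontinuous {R : realType} {T : topologicalType} (h : T -> R[i]) :=
  continuous (fun x => complex.Re (h x) : R^o) /\ continuous (fun x => complex.Im (h x) : R^o).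

Definition is_character {R : realType} {G : topologicalZmodType} (h : G -> R[i]) :=
  [/\ forall x, cnorm (h x) = 1,
      forall x y, h (x + y) = h x * h y
    & ccontinuous h].

(* Gam is (a realization of) the dual group of G via the pairing
   e x xi = <x, xi> = e_xi(x):  xi |-> e_xi is a group isomorphism of Gam onto the
   group of continuous characters of G (with pointwise product), and the topology of
   Gam is the compact-open topology (uniform convergence on compact subsets of G). *)
Definition dual_pairing {R : realType} {G Gam : topologicalZmodType}
    (e : G -> Gam -> R[i]) :=
  [/\ forall xi, is_character (fun x => e x xi),
      forall x xi eta, e x (xi + eta) = e x xi * e x eta,
      forall xi eta, (forall x, e x xi = e x eta) -> xi = eta,
      forall chi : G -> R[i], is_character chi -> exists xi, forall x, chi x = e x xi
    & forall (xi0 : Gam) (N : set Gam),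
        nbhs xi0 N <->
        exists K : set G, compact K /\
          exists2 r : R, 0 < r &
            [set xi | forall x, K x -> cnorm (e x xi - e x xi0) < r] `<=` N].

Section Lspaces.
Context {R : realType} {d : measure_display} {T : measurableType d}.
Variable mu : {measure set T -> \bar R}.

Definition cmeasurable (f : T -> R[i]) :=
  measurable_fun setT (fun x => complex.Re (f x)) /\
  measurable_fun setT (fun x => complex.Im (f x)).

Definition sqnorm (f : T -> R[i]) : \bar R :=
  (\int[mu]_x ((cnorm (f x)) ^+ 2)%:E)%E.

Definition L2 (f : T -> R[i]) := cmeasurable f /\ (sqnorm f < +oo)%E.

Definition L1 (f : T -> R[i]) :=
  cmeasurable f /\ (\int[mu]_x (cnorm (f x))%:E < +oo)%E.

Definition norm2 (f : T -> R[i]) : R := Num.sqrt (fine (sqnorm f)).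

Definition cintegral (f : T -> R[i]) : R[i] :=
  Complex (fine (\int[mu]_x (complex.Re (f x))%:E)%E)
          (fine (\int[mu]_x (complex.Im (f x))%:E)%E).

End Lspaces.

Definition fourier {R : realType} {G Gam : topologicalZmodType}
    (mu : {measure set borelT G -> \bar R}) (e : G -> Gam -> R[i])
    (f : borelT G -> R[i]) : borelT Gam -> R[i] :=
  fun xi => cintegral mu (fun x => f x * (conjc (e x xi))).

Definition spectral_pair {R : realType} {G Gam : topologicalZmodType}
    (mu : {measure set borelT G -> \bar R}) (nu : {measure set borelT Gam -> \bar R})
    (e : G -> Gam -> R[i]) :=
  (forall f, L1 mu f -> L2 mu f ->
     cmeasurable (fourier mu e f) /\ sqnorm nu (fourier mu e f) = sqnorm mu f) /\
  (forall g, L2 nu g -> forall r : R, 0 < r ->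
     exists f, [/\ L1 mu f, L2 mu f &
                   norm2 nu (fun xi => g xi - fourier mu e f xi) < r]).

(* F : L2(mu) -> L2(nu) is the isometric (linear) extension by continuity of F#
   from L1 /\ L2 (determined up to nu-a.e. equality). *)
Definition assoc_unitary {R : realType} {G Gam : topologicalZmodType}
    (mu : {measure set borelT G -> \bar R}) (nu : {measure set borelT Gam -> \bar R})
    (e : G -> Gam -> R[i]) (F : (borelT G -> R[i]) -> (borelT Gam -> R[i])) :=
  [/\ forall f, L2 mu f -> L2 nu (F f) /\ norm2 nu (F f) = norm2 mu f,
      forall f g (a : R[i]), L2 mu f -> L2 mu g ->
        {ae nu, forall xi, F (fun x => f x + a * g x) xi = F f xi + a * F g xi}
    & forall f, L1 mu f -> L2 mu f -> {ae nu, forall xi, F f xi = fourier mu e f xi}].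

(* Main.v *)
Require Import Defs.
From HB Require Import structures.
From mathcomp Require Import all_boot all_order all_algebra.
From mathcomp Require Import all_classical all_reals all_analysis.
From mathcomp Require Import complex.
From mathcomp Require Import lra ring measurable_realfun.
Import Order.TTheory GRing.Theory Num.Theory.
Local Open Scope ring_scope.
Local Open Scope classical_set_scope.

Section Basic.
Context {R : realType}.

Lemma cnorm_ge0 (z : R[i]) : 0 <= cnorm z.
Proof. by case: z => a b; rewrite /cnorm /= sqrtr_ge0. Qed.

Lemma cnorm_sq (z : R[i]) : cnorm z ^+ 2 = complex.Re z ^+ 2 + complex.Im z ^+ 2.
Proof. by case: z => a b; rewrite /cnorm /= sqr_sqrtr // addr_ge0 // sqr_ge0. Qed.

Lemma cnorm0 : cnorm (0 : R[i]) = 0.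
Proof. by rewrite /cnorm /= expr0n /= addr0 sqrtr0. Qed.

Lemma cnormD (y z : R[i]) : cnorm (y + z) <= cnorm y + cnorm z.
Proof. exact: le_normcD. Qed.

Lemma cnormM (y z : R[i]) : cnorm (y * z) = cnorm y * cnorm z.
Proof. exact: ComplexField.Normc.normcM. Qed.

Lemma cnorm_conj (z : R[i]) : cnorm (conjc z) = cnorm z.
Proof. by case: z => a b; rewrite /cnorm /= sqrrN. Qed.

Lemma cnormC (r : R) : cnorm ((r%:C)%C) = `|r|.
Proof. by rewrite /cnorm /= expr0n /= addr0 sqrtr_sqr. Qed.

Lemma cnormB (y z : R[i]) : cnorm (y - z) = cnorm (z - y).
Proof. by rewrite -opprB /cnorm; exact: normcN. Qed.

Lemma Re_scal (r : R) (z : R[i]) : complex.Re (((r%:C)%C) * z) = r * complex.Re z.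
Proof. by case: z => a b /=; rewrite mul0r subr0. Qed.

Lemma Im_scal (r : R) (z : R[i]) : complex.Im (((r%:C)%C) * z) = r * complex.Im z.
Proof. by case: z => a b /=; rewrite mul0r addr0. Qed.

Lemma Re_sub (y z : R[i]) : complex.Re (y - z) = complex.Re y - complex.Re z.
Proof. by case: y; case: z. Qed.

Lemma Im_sub (y z : R[i]) : complex.Im (y - z) = complex.Im y - complex.Im z.
Proof. by case: y; case: z. Qed.

Lemma Re_mulconj (y z : R[i]) :
  complex.Re (y * conjc z) = complex.Re y * complex.Re z + complex.Im y * complex.Im z.
Proof. by case: y => a b; case: z => c d /=; rewrite mulrN opprK. Qed.

Lemma Im_mulconj (y z : R[i]) :
  complex.Im (y * conjc z) = complex.Im y * complex.Re z - complex.Re y * complex.Im z.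
Proof. by case: y => a b; case: z => c d /=; rewrite mulrN addrC. Qed.

Lemma CSreal (I a b : R) : 0 <= a -> 0 <= b -> 0 <= I ->
  (forall t, 0 < t -> 2 * t * I <= t ^+ 2 * a + b) -> I ^+ 2 <= a * b.
Proof.
move=> a0 b0 I0 H.
have [->|Ipos] := eqVneq I 0; first by rewrite expr0n /= mulr_ge0.
have Igt : 0 < I by rewrite lt_def Ipos.
have [a00|ap] := eqVneq a 0.
  have := H ((b + 1) / I) (divr_gt0 (ltr_wpDl b0 ltr01) Igt).
  rewrite a00 mulr0 add0r -mulrA divfK //; lra.
have agt : 0 < a by rewrite lt_def ap.
set t := I / a.
have ta : t * a = I by rewrite /t mulfVK.
have := H t (divr_gt0 Igt agt).
rewrite expr2 -ta; nra.
Qed.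

End Basic.
Section Int.
Context d (T : measurableType d) (R : realType) (mu : {measure set T -> \bar R}).
Local Notation sqi u := (\int[mu]_x (((u x) ^+ 2)%:E))%E.

Lemma fin_ge0E {x : \bar R} : (0 <= x)%E -> (x < +oo)%E -> x = (fine x)%:E.
Proof. by move=> x0 xoo; rewrite fineK // ge0_fin_numE. Qed.

Lemma mEF (u : T -> R) : measurable_fun setT u -> measurable_fun setT (fun x => (u x)%:E).
Proof. by move=> mu'; apply/measurable_EFinP. Qed.

Lemma CS (u v : T -> R) : measurable_fun setT u -> measurable_fun setT v ->
  (forall x, 0 <= u x) -> (forall x, 0 <= v x) ->
  (sqi u < +oo)%E -> (sqi v < +oo)%E ->
  (\int[mu]_x (u x * v x)%:E < +oo)%E /\
  (fine (\int[mu]_x (u x * v x)%:E)) ^+ 2 <= fine (sqi u) * fine (sqi v).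
Proof.
move=> mu' mv u0 v0 fu fv.
have muv : measurable_fun setT (fun x => (u x * v x)%:E).
  by apply: mEF; exact: measurable_funM.
have mu2 : measurable_fun setT (fun x => (u x ^+ 2)%:E).
  by apply: mEF; exact: measurable_funX.
have mv2 : measurable_fun setT (fun x => (v x ^+ 2)%:E).
  by apply: mEF; exact: measurable_funX.
have key t : 0 < t -> ((2 * t)%:E * \int[mu]_x (u x * v x)%:E <=
                       (t ^+ 2)%:E * sqi u + sqi v)%E.
  move=> t0.
  have t0' : 0 <= t by exact: ltW.
  rewrite -ge0_integralZl //; last 2 first.
  - by move=> x _; rewrite lee_fin mulr_ge0.
  - by rewrite lee_fin mulr_ge0.
  rewrite -ge0_integralZl //; last 2 first.
  - by move=> x _; rewrite lee_fin sqr_ge0.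
  - by rewrite lee_fin sqr_ge0.
  rewrite -ge0_integralD //; last 3 first.
  - by move=> x _; rewrite -EFinM lee_fin mulr_ge0 // sqr_ge0.
  - by apply: emeasurable_funM => //; exact: measurable_cst.
  - by move=> x _; rewrite lee_fin sqr_ge0.
  apply: ge0_le_integral => //.
  - by move=> x _; rewrite -EFinM lee_fin !mulr_ge0 // ltW.
  - by apply: emeasurable_funM => //; exact: measurable_cst.
  - apply: emeasurable_funD => //.
    by apply: emeasurable_funM => //; exact: measurable_cst.
  move=> x _; rewrite -!EFinM -EFinD lee_fin.
  have := sqr_ge0 (t * u x - v x); nra.
have J0 : (0 <= \int[mu]_x (u x * v x)%:E)%E.
  by apply: integral_ge0 => x _; rewrite lee_fin mulr_ge0.
have U0 : (0 <= sqi u)%E by apply: integral_ge0 => x _; rewrite lee_fin sqr_ge0.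
have V0 : (0 <= sqi v)%E by apply: integral_ge0 => x _; rewrite lee_fin sqr_ge0.
have Jfin : (\int[mu]_x (u x * v x)%:E < +oo)%E.
  have := key 1 ltr01; rewrite expr1n mul1e mulr1.
  rewrite (fin_ge0E U0 fu) (fin_ge0E V0 fv) -EFinD.
  move: J0; set J := (\int[mu]_x (u x * v x)%:E)%E.
  case: J => [r _ _|_|//]; first by rewrite ltry.
  by rewrite mulry gtr0_sg ?mul1e ?leye_eq // ltr0n.
split => //.
apply: CSreal.
- by rewrite fine_ge0.
- by rewrite fine_ge0.
- by rewrite fine_ge0.
move=> t t0; have := key t t0.
rewrite (fin_ge0E U0 fu) (fin_ge0E V0 fv) (fin_ge0E J0 Jfin) -!EFinM -EFinD lee_fin.
by move=> h; apply: le_trans h; rewrite /= lexx.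
Qed.


Definition N2 (u : T -> R) := Num.sqrt (fine (sqi u)).

Lemma sqi_ge0 {u} : (0 <= sqi u)%E.
Proof. by apply: integral_ge0 => x _; rewrite lee_fin sqr_ge0. Qed.

Lemma N2_ge0 u : 0 <= N2 u.
Proof. exact: sqrtr_ge0. Qed.

Lemma sqiE {u} : (sqi u < +oo)%E -> sqi u = ((N2 u) ^+ 2)%:E.
Proof.
move=> fu; rewrite /N2 sqr_sqrtr; first exact: fin_ge0E sqi_ge0 fu.
by rewrite fine_ge0 // sqi_ge0.
Qed.

Lemma sqi_mono (u v : T -> R) : measurable_fun setT u -> measurable_fun setT v ->
  (forall x, 0 <= u x) ->
  {ae mu, forall x, u x <= v x} -> (sqi u <= sqi v)%E.
Proof.
move=> mu' mv u0 H.
rewrite /sqnorm; apply: ae_ge0_le_integral => //.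
- by move=> x _; rewrite lee_fin sqr_ge0.
- by apply: mEF; exact: measurable_funX.
- by move=> x _; rewrite lee_fin sqr_ge0.
- by apply: mEF; exact: measurable_funX.
apply: filterS H => x uv _; rewrite lee_fin; have := u0 x; nra.
Qed.

Lemma N2_mono (u v : T -> R) : measurable_fun setT u -> measurable_fun setT v ->
  (forall x, 0 <= u x) -> (sqi v < +oo)%E ->
  {ae mu, forall x, u x <= v x} -> (sqi u < +oo)%E /\ N2 u <= N2 v.
Proof.
move=> mu' mv u0 fv H.
have le := sqi_mono _ _ mu' mv u0 H.
have fu : (sqi u < +oo)%E by apply: le_lt_trans fv.
split => //.
move: le; rewrite (sqiE fu) (sqiE fv) lee_fin => le.
by rewrite -(ler_pXn2r (n := 2)) // nnegrE N2_ge0.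
Qed.

Lemma mink_real (na nb J X : R) : 0 <= na -> 0 <= nb -> 0 <= J ->
  J ^+ 2 <= na ^+ 2 * nb ^+ 2 -> X = na ^+ 2 + 2 * J + nb ^+ 2 ->
  Num.sqrt X <= na + nb.
Proof.
move=> a0 b0 J0 HJ ->.
have Jle : J <= na * nb.
  rewrite -(ler_pXn2r (n := 2)) ?nnegrE ?mulr_ge0 // exprMn //.
rewrite -[leRHS]ger0_norm ?addr_ge0 // -sqrtr_sqr ler_wsqrtr //.
nra.
Qed.

Lemma mink (u v : T -> R) : measurable_fun setT u -> measurable_fun setT v ->
  (forall x, 0 <= u x) -> (forall x, 0 <= v x) ->
  (sqi u < +oo)%E -> (sqi v < +oo)%E ->
  (sqi (fun x => u x + v x) < +oo)%E /\ N2 (fun x => u x + v x) <= N2 u + N2 v.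
Proof.
move=> mu' mv u0 v0 fu fv.
have [Jf Jle] := CS _ _ mu' mv u0 v0 fu fv.
have J0 : (0 <= \int[mu]_x (u x * v x)%:E)%E.
  by apply: integral_ge0 => x _; rewrite lee_fin mulr_ge0.
have muv : measurable_fun setT (fun x => (u x * v x)%:E).
  by apply: mEF; exact: measurable_funM.
have mu2 : measurable_fun setT (fun x => (u x ^+ 2)%:E).
  by apply: mEF; exact: measurable_funX.
have mv2 : measurable_fun setT (fun x => (v x ^+ 2)%:E).
  by apply: mEF; exact: measurable_funX.
have Esq : sqi (fun x => u x + v x) =
    (sqi u + (2%:E * \int[mu]_x (u x * v x)%:E + sqi v))%E.
  have n_u2 : forall x, [set: T] x -> (0 <= (u x ^+ 2)%:E)%E.
    by move=> x _; rewrite lee_fin sqr_ge0.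
  have n_v2 : forall x, [set: T] x -> (0 <= (v x ^+ 2)%:E)%E.
    by move=> x _; rewrite lee_fin sqr_ge0.
  have n_uv : forall x, [set: T] x -> (0 <= (u x * v x)%:E)%E.
    by move=> x _; rewrite lee_fin mulr_ge0.
  have n_2uv : forall x, [set: T] x -> (0 <= 2%:E * (u x * v x)%:E)%E.
    by move=> x _; rewrite -EFinM lee_fin !mulr_ge0.
  have m_2uv : measurable_fun setT (fun x => 2%:E * (u x * v x)%:E)%E.
    by apply: emeasurable_funM => //; exact: measurable_cst.
  have n_s : forall x, [set: T] x ->
      (0 <= 2%:E * (u x * v x)%:E + (v x ^+ 2)%:E)%E.
    by move=> x _; rewrite adde_ge0 // ?n_2uv ?n_v2.
  have m_s : measurable_fun setT
      (fun x => 2%:E * (u x * v x)%:E + (v x ^+ 2)%:E)%E.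
    exact: emeasurable_funD.
  rewrite -ge0_integralZl // -ge0_integralD // -ge0_integralD //.
  apply: eq_integral => x _; rewrite -EFinM -!EFinD; congr (_%:E).
  by rewrite sqrrD; ring.
have fuv : (sqi (fun x => u x + v x) < +oo)%E.
  rewrite Esq (sqiE fu) (sqiE fv) (fin_ge0E J0 Jf) -EFinM -!EFinD.
  exact: ltry.
split => //.
rewrite [N2 (fun x => _)]/N2 Esq (sqiE fu) (sqiE fv) (fin_ge0E J0 Jf) -EFinM -!EFinD /=.
apply: (@mink_real (N2 u) (N2 v) (fine (\int[mu]_x (u x * v x)%:E)%E)).
- exact: N2_ge0.
- exact: N2_ge0.
- by rewrite fine_ge0.
- by move: Jle; rewrite (sqiE fu) (sqiE fv) /=.
- by ring.
Qed.

End Int.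
Section CInt.
Context d (T : measurableType d) (R : realType) (mu : {measure set T -> \bar R}).

Lemma indic01 (A : set T) x : (\1_A x = 1 :> R /\ A x) \/ (\1_A x = 0 :> R /\ ~ A x).
Proof.
rewrite indicE; case: (boolP (x \in A)) => xA.
  by left; split => //; move: xA; rewrite inE.
by right; split => // Ax; move/negP: xA; apply; rewrite inE.
Qed.

Lemma cmeas_norm {f : T -> R[i]} : cmeasurable f ->
  measurable_fun setT (fun x => cnorm (f x)).
Proof.
move=> [mre mim].
have -> : (fun x => cnorm (f x)) =
    (Num.sqrt \o (fun x => complex.Re (f x) ^+ 2 + complex.Im (f x) ^+ 2)).
  by apply: boolp.funext => x /=; case: (f x).
apply: (measurableT_comp (continuous_measurable_fun (@sqrt_continuous R))).
by apply: measurable_funD; exact: measurable_funX.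
Qed.

Lemma cnorm_ge0' (f : T -> R[i]) : forall x, 0 <= cnorm (f x).
Proof. by move=> x; exact: cnorm_ge0. Qed.

Lemma L2_le (f g : T -> R[i]) : L2 mu f -> cmeasurable g ->
  (forall x, cnorm (g x) <= cnorm (f x)) -> L2 mu g /\ norm2 mu g <= norm2 mu f.
Proof.
move=> [mf ff] mg le.
have [] := @N2_mono _ _ _ mu (fun x => cnorm (g x)) (fun x => cnorm (f x))
  (cmeas_norm mg) (cmeas_norm mf) (@cnorm_ge0' g) ff.
  by apply: nearW => x; exact: le.
by move=> fg H; split.
Qed.

Lemma cmeas_chi (A : set T) (f : T -> R[i]) : measurable A -> cmeasurable f ->
  cmeasurable (fun x => ((\1_A x)%:C)%C * f x).
Proof.
move=> mA [mre mim]; split.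
- have -> : (fun x => complex.Re (((\1_A x)%:C)%C * f x)) =
      (fun x => \1_A x * complex.Re (f x)) by apply: boolp.funext => x; exact: Re_scal.
  by apply: measurable_funM => //; exact: measurable_indic.
- have -> : (fun x => complex.Im (((\1_A x)%:C)%C * f x)) =
      (fun x => \1_A x * complex.Im (f x)) by apply: boolp.funext => x; exact: Im_scal.
  by apply: measurable_funM => //; exact: measurable_indic.
Qed.

Lemma cmeas_sub (f g : T -> R[i]) : cmeasurable f -> cmeasurable g ->
  cmeasurable (fun x => f x - g x).
Proof.
move=> [mre mim] [mre' mim']; split.
- have -> : (fun x => complex.Re (f x - g x)) =
      (fun x => complex.Re (f x) - complex.Re (g x)) by apply: boolp.funext => x; exact: Re_sub.
  exact: measurable_funB.
- have -> : (fun x => complex.Im (f x - g x)) =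
      (fun x => complex.Im (f x) - complex.Im (g x)) by apply: boolp.funext => x; exact: Im_sub.
  exact: measurable_funB.
Qed.

Lemma cnorm_chi (A : set T) x (z : R[i]) : cnorm (((\1_A x)%:C)%C * z) <= cnorm z.
Proof.
case: (indic01 A x) => [[-> _]|[-> _]]; first by rewrite mul1r.
by rewrite mul0r /cnorm ComplexField.Normc.normc0 cnorm_ge0.
Qed.

Lemma cnorm_chiC (A : set T) x (z : R[i]) : cnorm (z - ((\1_A x)%:C)%C * z) <= cnorm z.
Proof.
case: (indic01 A x) => [[-> _]|[-> _]]; first by rewrite mul1r subrr /cnorm ComplexField.Normc.normc0 cnorm_ge0.
by rewrite mul0r subr0.
Qed.

Lemma L2_chi (A : set T) f : measurable A -> L2 mu f ->
  L2 mu (fun x => ((\1_A x)%:C)%C * f x) /\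
  norm2 mu (fun x => ((\1_A x)%:C)%C * f x) <= norm2 mu f.
Proof.
move=> mA Lf; apply: L2_le => //; last by move=> x; exact: cnorm_chi.
by apply: cmeas_chi => //; case: Lf.
Qed.

Lemma L2_chiC (A : set T) f : measurable A -> L2 mu f ->
  L2 mu (fun x => f x - ((\1_A x)%:C)%C * f x).
Proof.
move=> mA Lf; have [mf _] := Lf.
have := @L2_le f (fun x => f x - ((\1_A x)%:C)%C * f x) Lf
  (cmeas_sub _ _ mf (cmeas_chi _ _ mA mf)) (fun x => cnorm_chiC A x (f x)).
by case.
Qed.


Lemma real_cs2 (p q x y : R) :
  p * x + q * y <= Num.sqrt (p ^+ 2 + q ^+ 2) * Num.sqrt (x ^+ 2 + y ^+ 2).
Proof.
rewrite -sqrtrM ?addr_ge0 ?sqr_ge0 //.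
apply: le_trans (ler_norm _) _.
rewrite -sqrtr_sqr; apply: ler_wsqrtr.
have := sqr_ge0 (p * y - q * x); nra.
Qed.

Lemma Re_le_cnorm (z : R[i]) : `|complex.Re z| <= cnorm z.
Proof.
case: z => a b; rewrite /cnorm /= -sqrtr_sqr; apply: ler_wsqrtr.
by rewrite lerDl sqr_ge0.
Qed.

Lemma Im_le_cnorm (z : R[i]) : `|complex.Im z| <= cnorm z.
Proof.
case: z => a b; rewrite /cnorm /= -sqrtr_sqr; apply: ler_wsqrtr.
by rewrite lerDr sqr_ge0.
Qed.

Lemma int_dom {g b : T -> R} : measurable_fun setT g -> measurable_fun setT b ->
  (forall x, `|g x| <= b x) -> (\int[mu]_x (b x)%:E < +oo)%E ->
  mu.-integrable setT (fun x => (g x)%:E).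
Proof.
move=> mg mb gb fb; apply/integrableP; split; first exact: mEF.
apply: le_lt_trans fb; apply: ge0_le_integral => //.
- apply: measurableT_comp => //; exact: mEF.
- exact: mEF.
by move=> x _; rewrite /= lee_fin gb.
Qed.

Lemma fourier_bound (g w : T -> R[i]) : cmeasurable g -> cmeasurable w ->
  (forall x, cnorm (w x) = 1) ->
  (\int[mu]_x (cnorm (g x))%:E < +oo)%E ->
  cnorm (cintegral mu (fun x => g x * conjc (w x))) <=
    fine (\int[mu]_x (cnorm (g x))%:E).
Proof.
move=> [mgr mgi] [mwr mwi] hw fI.
have mg : cmeasurable g by [].
have cn x : cnorm (g x * conjc (w x)) = cnorm (g x).
  by rewrite cnormM cnorm_conj hw mulr1.
set re := fun x => complex.Re (g x * conjc (w x)).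
set im := fun x => complex.Im (g x * conjc (w x)).
have mre : measurable_fun setT re.
  have -> : re = (fun x => complex.Re (g x) * complex.Re (w x) +
                           complex.Im (g x) * complex.Im (w x)).
    by apply: boolp.funext => x; rewrite /re Re_mulconj.
  by apply: measurable_funD; apply: measurable_funM.
have mim : measurable_fun setT im.
  have -> : im = (fun x => complex.Im (g x) * complex.Re (w x) -
                           complex.Re (g x) * complex.Im (w x)).
    by apply: boolp.funext => x; rewrite /im Im_mulconj.
  by apply: measurable_funB; apply: measurable_funM.
have mcn := cmeas_norm mg.
have ire : mu.-integrable setT (fun x => (re x)%:E).
  apply: (int_dom mre mcn) => // x; rewrite -cn; exact: Re_le_cnorm.
have iim : mu.-integrable setT (fun x => (im x)%:E).
  apply: (int_dom mim mcn) => // x; rewrite -cn; exact: Im_le_cnorm.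
have icn : mu.-integrable setT (fun x => (cnorm (g x))%:E).
  apply: (int_dom mcn mcn) => // x; rewrite ger0_norm //; exact: cnorm_ge0.
have I0 : (0 <= \int[mu]_x (cnorm (g x))%:E)%E.
  by apply: integral_ge0 => x _; rewrite lee_fin cnorm_ge0.
rewrite /cintegral -/re -/im.
set P := (\int[mu]_x (re x)%:E)%E.
set Q := (\int[mu]_x (im x)%:E)%E.
have PE : P = (fine P)%:E by rewrite fineK // integrable_fin_num.
have QE : Q = (fine Q)%:E by rewrite fineK // integrable_fin_num.
set p := fine P; set q := fine Q.
set I := fine (\int[mu]_x (cnorm (g x))%:E)%E.
have IE : (\int[mu]_x (cnorm (g x))%:E)%E = I%:E by rewrite fineK // integrable_fin_num.
set s := Num.sqrt (p ^+ 2 + q ^+ 2).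
have key : p ^+ 2 + q ^+ 2 <= s * I.
  have E1 : ((p ^+ 2 + q ^+ 2)%:E =
      \int[mu]_x (p%:E * (re x)%:E + q%:E * (im x)%:E))%E.
    rewrite integralD //; last 2 first.
    - exact: integrableZl.
    - exact: integrableZl.
    rewrite integralZl // integralZl // -/P -/Q PE QE -!EFinM -EFinD.
    by rewrite !expr2.
  have E2 : (\int[mu]_x (s%:E * (cnorm (g x))%:E) = (s * I)%:E)%E.
    by rewrite integralZl // IE -EFinM.
  rewrite -lee_fin E1 -E2.
  apply: le_integral => //.
  - by apply: integrableD => //; exact: integrableZl.
  - exact: integrableZl.
  move=> x _; rewrite -!EFinM -EFinD lee_fin.
  rewrite -(cn x) /re /im /s.
  case: (g x * conjc (w x)) => a b /=.
  exact: real_cs2.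
have s0 : 0 <= s by exact: sqrtr_ge0.
have I0' : 0 <= I by rewrite fine_ge0.
rewrite /cnorm /= -/p -/q -/s.
have ss : s ^+ 2 = p ^+ 2 + q ^+ 2 by rewrite sqr_sqrtr // addr_ge0 // sqr_ge0.
rewrite -ss in key.
nra.
Qed.

Lemma sqnorm_chi_null (B : set T) (g : T -> R[i]) : measurable B -> mu B = 0 ->
  cmeasurable g -> sqnorm mu (fun x => ((\1_B x)%:C)%C * g x) = 0.
Proof.
move=> mB B0 mg.
have mc := cmeas_norm (cmeas_chi _ _ mB mg).
apply/eqP; rewrite eq_le sqi_ge0 andbT.
have -> : (0 = \int[mu]_x (cst 0 x))%E by rewrite integral0.
rewrite /sqnorm; apply: ae_ge0_le_integral => //.
- by move=> x _; rewrite lee_fin sqr_ge0.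
- by apply: mEF; exact: measurable_funX.
exists B; split => // x /= Hx; case: (indic01 B x) => [[_ Bx]|[B0x _]] //.
exfalso; apply: Hx => _.
by rewrite B0x mul0r /cnorm ComplexField.Normc.normc0 expr0n.
Qed.

Lemma norm2_zero (g : T -> R[i]) : sqnorm mu g = 0 -> norm2 mu g = 0.
Proof. by move=> H; rewrite /norm2 H /= sqrtr0. Qed.

End CInt.

Lemma cont_meas (R : realType) (G : topologicalZmodType) (u : G -> R) :
  continuous (u : G -> R^o) ->
  measurable_fun (setT : set (borelT G)) (u : borelT G -> R).
Proof.
move=> cu mD; apply: (measurability _ (RGenOInfty.measurableE R)) => //.
move=> _ [_ [x ->] <-].
apply: sub_sigma_algebra; rewrite setTI.
have -> : `]x, +oo[%classic = [set y : R^o | x < y].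
  by apply/seteqP; split => y /=; rewrite in_itv /= andbT.
apply: (@open_comp G R^o u [set y : R^o | x < y]); last exact: open_gt.
by move=> y _; exact: cu.
Qed.

Theorem theoremA11 (R : realType) (G Gam : topologicalZmodType)
  (hausG : hausdorff_space G) (lcG : locally_compact [set: G])
  (hausGam : hausdorff_space Gam) (lcGam : locally_compact [set: Gam])
  (e : G -> Gam -> R[i]) (he : dual_pairing e)
  (mu : {measure set borelT G -> \bar R}) (nu : {measure set borelT Gam -> \bar R})
  (hsp : spectral_pair mu nu e)
  (F : (borelT G -> R[i]) -> (borelT Gam -> R[i])) (hF : assoc_unitary mu nu e F)
  (f : borelT G -> R[i]) (hf : L2 mu f) (hf0 : 0 < norm2 mu f)
  (eps delta : R) (heps : 0 <= eps) (hdelta : 0 <= delta) (hed : eps + delta <= 1)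
  (A : set (borelT G)) (B : set (borelT Gam))
  (mA : measurable A) (mB : measurable B)
  (hA : norm2 mu (fun x => f x - ((\1_A x)%:C)%C * f x) <= eps * norm2 mu f)
  (hB : norm2 nu (fun xi => F f xi - ((\1_B xi)%:C)%C * F f xi)
          <= delta * norm2 nu (F f)) :
  (((1 - eps - delta) ^+ 2)%:E <= mu A * nu B)%E.
Proof.
move: he hF => [he1 _ _ _ _] [hF1 hF2 hF3].
set PA := fun x => ((\1_A x)%:C)%C * f x.
set QA := fun x => f x - ((\1_A x)%:C)%C * f x.
have [LPA nPA] := @L2_chi _ _ _ mu _ _ mA hf.
have LQA := @L2_chiC _ _ _ mu _ _ mA hf.
have [LFf nFf] := hF1 f hf.
have [Lh nh] := hF1 _ LPA.
have [Lk nk] := hF1 _ LQA.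
have lin := hF2 PA QA 1 LPA LQA.
have feq : (fun x => PA x + 1 * QA x) = f.
  by apply: boolp.funext => x; rewrite mul1r /PA /QA addrC subrK.
rewrite feq in lin.
set a := norm2 mu f.
set c := 1 - eps - delta.
set h := F PA.
set k := F QA.
set Ff := F f.
set Y := norm2 nu (fun xi => ((\1_B xi)%:C)%C * h xi).
have [LBh nBh] := @L2_chi _ _ _ nu _ _ mB Lh.
have LBF := @L2_chiC _ _ _ nu _ _ mB LFf.
have lower : c * a <= Y.
  set w1 := fun xi => cnorm (Ff xi - ((\1_B xi)%:C)%C * Ff xi).
  set w2 := fun xi => cnorm (((\1_B xi)%:C)%C * h xi).
  set w3 := fun xi => cnorm (k xi).
  have m1 : measurable_fun setT w1 := @cmeas_norm _ _ _ _ (proj1 LBF).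
  have m2 : measurable_fun setT w2 := @cmeas_norm _ _ _ _ (proj1 LBh).
  have m3 : measurable_fun setT w3 := @cmeas_norm _ _ _ _ (proj1 Lk).
  have mF : measurable_fun setT (fun xi => cnorm (Ff xi)) := @cmeas_norm _ _ _ _ (proj1 LFf).
  have p1 : forall xi, 0 <= w1 xi by move=> xi; exact: cnorm_ge0.
  have p2 : forall xi, 0 <= w2 xi by move=> xi; exact: cnorm_ge0.
  have p3 : forall xi, 0 <= w3 xi by move=> xi; exact: cnorm_ge0.
  have [f12 n12] := @mink _ _ _ nu w1 w2 m1 m2 p1 p2 (proj2 LBF) (proj2 LBh).
  have m12 : measurable_fun setT (fun xi => w1 xi + w2 xi) by exact: measurable_funD.
  have p12 : forall xi, 0 <= w1 xi + w2 xi by move=> xi; exact: addr_ge0.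
  have [f123 n123] := @mink _ _ _ nu _ w3 m12 m3 p12 p3 f12 (proj2 Lk).
  have m123 : measurable_fun setT (fun xi => (w1 xi + w2 xi) + w3 xi).
    exact: measurable_funD.
  have aeb : {ae nu, forall xi, cnorm (Ff xi) <= (w1 xi + w2 xi) + w3 xi}.
    apply: filterS lin => xi Hxi.
    rewrite /w1 /w2 /w3 /Ff Hxi mul1r.
    case: (@indic01 _ _ R B xi) => [[-> _]|[-> _]].
      rewrite !mul1r subrr cnorm0 add0r; exact: cnormD.
    rewrite !mul0r subr0 -addrA lerDl; apply: addr_ge0; exact: cnorm_ge0.
  have [_ nmono] := @N2_mono _ _ _ nu (fun xi => cnorm (Ff xi)) _ mF m123
     (fun xi => cnorm_ge0 _) f123 aeb.
  have eN1 : @N2 _ _ _ nu (fun xi => cnorm (Ff xi)) = a by exact: nFf.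
  have eN3 : @N2 _ _ _ nu w3 = norm2 mu QA by exact: nk.
  have eN1' : @N2 _ _ _ nu w1 <= delta * a.
    by move: hB; rewrite nFf.
  have eN2 : @N2 _ _ _ nu w2 = Y by [].
  rewrite eN1 in nmono.
  have : a <= (delta * a + Y) + eps * a.
    apply: (le_trans nmono); apply: (le_trans n123); rewrite eN3.
    apply: lerD; last exact: hA.
    by apply: (le_trans n12); rewrite eN2; apply: lerD.
  rewrite /c; lra.
have Y0 : 0 <= Y by exact: sqrtr_ge0.
have a0 : 0 < a := hf0.
have c0 : 0 <= c by rewrite /c; lra.
have muA0 : (0 <= mu A)%E by exact: measure_ge0.
have nuB0 : (0 <= nu B)%E by exact: measure_ge0.
have [Z|NZ] := boolP ((mu A == 0) || (nu B == 0)).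
  have YZ : Y <= 0.
    case/orP: Z => /eqP Z.
      have h0 : norm2 mu PA = 0.
        by apply: norm2_zero; apply: sqnorm_chi_null => //; case: hf.
      by apply: (le_trans nBh); rewrite nh h0.
    by rewrite /Y norm2_zero // sqnorm_chi_null //; case: Lh.
  have -> : c = 0 by nra.
  by rewrite expr0n /= mule_ge0.
move: NZ; rewrite negb_or => /andP [nA0 nB0].
have pA : (0 < mu A)%E by rewrite lt_def nA0 muA0.
have pB : (0 < nu B)%E by rewrite lt_def nB0 nuB0.
case EA: (mu A) => [ma| |]; last by move: muA0; rewrite EA.
  2: by rewrite gt0_mulye ?leey // -EA.
case EB: (nu B) => [nb| |]; last by move: nuB0; rewrite EB.
  2: by rewrite gt0_muley ?leey // -EA.
have ma0 : 0 <= ma by move: muA0; rewrite EA lee_fin.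
have nb0 : 0 <= nb by move: nuB0; rewrite EB lee_fin.
have mcf : measurable_fun setT (fun x => cnorm (f x)) := @cmeas_norm _ _ _ _ (proj1 hf).
have mi : measurable_fun setT (\1_A : _ -> R) by exact: measurable_indic.
have i0 : forall x, 0 <= (\1_A x : R) by move=> x; rewrite indicE.
have sqA : (\int[mu]_x (((\1_A x : R) ^+ 2)%:E) = ma%:E)%E.
  transitivity (\int[mu]_x ((\1_A x : R)%:E))%E.
    apply: eq_integral => x _; congr (_%:E).
    by case: (@indic01 _ _ R A x) => [[-> _]|[-> _]]; rewrite ?expr1n ?expr0n.
  by rewrite integral_indic // setIT EA.
have fA : (\int[mu]_x (((\1_A x : R) ^+ 2)%:E) < +oo)%E by rewrite sqA ltry.
have [CS1 CS2] := @CS _ _ _ mu (\1_A) (fun x => cnorm (f x)) mi mcf i0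
   (fun x => cnorm_ge0 _) fA (proj2 hf).
have eqPA : forall x, cnorm (PA x) = \1_A x * cnorm (f x).
  by move=> x; rewrite /PA cnormM cnormC ger0_norm.
have intPA : (\int[mu]_x (cnorm (PA x))%:E =
              \int[mu]_x (\1_A x * cnorm (f x))%:E)%E.
  by apply: eq_integral => x _; rewrite eqPA.
have L1PA : L1 mu PA by split; [exact: (proj1 LPA)|rewrite intPA].
set I := fine (\int[mu]_x (cnorm (PA x))%:E)%E.
have I0 : 0 <= I by rewrite fine_ge0 // integral_ge0 // => x _; rewrite lee_fin cnorm_ge0.
have Ibound : I ^+ 2 <= ma * a ^+ 2.
  move: CS2; rewrite sqA (@sqiE _ _ _ mu (fun x => cnorm (f x)) (proj2 hf)) /=.
  by rewrite /I intPA.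
have pw : {ae nu, forall xi, cnorm (h xi) ^+ 2 <= ma * a ^+ 2}.
  apply: filterS (hF3 PA L1PA LPA) => xi Hxi.
  rewrite /h Hxi /fourier.
  have cme : cmeasurable (fun x : borelT G => e x xi).
    by case: (he1 xi) => _ _ [cr ci]; split; apply: cont_meas.
  have hw : forall x : G, cnorm (e x xi) = 1 by case: (he1 xi).
  have := @fourier_bound _ _ _ mu PA (fun x : borelT G => e x xi) (proj1 LPA) cme
    hw (proj2 L1PA).
  rewrite -/I => le.
  apply: le_trans Ibound.
  by rewrite ler_pXn2r ?nnegrE ?cnorm_ge0.
have mBi : measurable_fun setT (fun xi => (\1_B xi : R)%:E).
  by apply: mEF; exact: measurable_indic.
have intB : (sqnorm nu (fun xi => (((\1_B xi)%:C)%C * h xi)%R) <=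
             ((ma * a ^+ 2) * nb)%:E)%E.
  rewrite /sqnorm.
  have -> : (((ma * a ^+ 2) * nb)%:E =
      \int[nu]_xi ((\1_B xi : R)%:E * (ma * a ^+ 2)%:E))%E.
    have n1 : forall xi, [set: borelT Gam] xi -> (0 <= (\1_B xi : R)%:E)%E.
      by move=> xi _; rewrite lee_fin indicE.
    have n2 : (0 <= (ma * a ^+ 2)%:E)%E by rewrite lee_fin mulr_ge0 // sqr_ge0.
    rewrite ge0_integralZr //.
    by rewrite integral_indic // setIT EB -EFinM mulrC.
  have mhB := @cmeas_norm _ _ _ _ (proj1 LBh).
  apply: ae_ge0_le_integral => //.
  - by move=> xi _; rewrite lee_fin sqr_ge0.
  - by apply: mEF; exact: measurable_funX.
  - by move=> xi _; rewrite -EFinM lee_fin mulr_ge0 // ?indicE // mulr_ge0 // sqr_ge0.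
  - by apply: emeasurable_funM => //; exact: measurable_cst.
  apply: filterS pw => xi Hxi _.
  case: (@indic01 _ _ R B xi) => [[-> _]|[-> _]].
    by rewrite mul1r -EFinM mul1r lee_fin.
  by rewrite mul0r cnorm0 -EFinM mul0r expr0n.
have Y2 : Y ^+ 2 <= (ma * a ^+ 2) * nb.
  have E : sqnorm nu (fun xi => (((\1_B xi)%:C)%C * h xi)%R) = (Y ^+ 2)%:E.
    exact: (@sqiE _ _ _ nu (fun xi => cnorm (((\1_B xi)%:C)%C * h xi)) (proj2 LBh)).
  by move: intB; rewrite E lee_fin.
rewrite -EFinM lee_fin.
have ca : (c * a) ^+ 2 <= Y ^+ 2.
  by rewrite ler_pXn2r ?nnegrE ?mulr_ge0 // ltW.
have : c ^+ 2 * a ^+ 2 <= (ma * nb) * a ^+ 2.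
  rewrite -exprMn; apply: (le_trans ca); apply: (le_trans Y2).
  by rewrite mulrAC.
by rewrite ler_pM2r // exprn_gt0.
Qed.
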